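(* For every integer $n\ge 1$, $$2^n\hat{A}_n(x)=\sum_{\sigma\in\mathfrak S_n}(1+x)^{\mathrm{dda}(\sigma)}\,2^{\mathrm{val}(\sigma)}\,(1+x^2)^{\mathrm{pk}(\sigma)},$$ where the statistics $\mathrm{dda},\mathrm{val},\mathrm{pk}$ are computed with the convention $\sigma(0)=\sigma(n+1)=n+1$; and $$\hat{B}_n(x)=\sum_{\sigma\in\mathfrak S_n}(1+x)^{\mathrm{dda}^0(\sigma)}\,2^{\mathrm{val}^0(\sigma)}\,(1+x^2)^{\mathrm{pk}^0(\sigma)},$$ where the statistics $\mathrm{dda}^0,\mathrm{val}^0,\mathrm{pk}^0$ are computed with the convention $\sigma(0)=0$, $\sigma(n+1)=n+1$.
   Context: $\mathfrak S_n$ is the symmetric group on $[n]=\{1,\dots,n\}$, permutations written as words $\sigma(1)\cdots\sigma(n)$. For $\sigma\in\mathfrak S_n$, an index $i\in[n-1]$ is an alternating descent of $\sigma$ if either $\sigma(i)>\sigma(i+1)$ and $i$ is odd, or $\sigma(i)<\sigma(i+1)$ and $i$ is even; $\hat d(\sigma)$ is the number of alternating descents and $\hat A_n(x)=\sum_{\sigma\in\mathfrak S_n}x^{\hat d(\sigma)}$. $\mathcal B_n$ is the set of signed permutations: bijections $\pi$ of $\{\pm1,\dots,\pm n\}$ with $\pi(-i)=-\pi(i)$, identified with the word $\pi(1)\cdots\pi(n)$, and always prepended with $\pi(0)=0$. An index $i\in\{0\}\cup[n-1]$ is an alternating descent of $\pi\in\mathcal B_n$ if either $\pi(i)<\pi(i+1)$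 and $i$ is even, or $\pi(i)>\pi(i+1)$ and $i$ is odd; $\hat d_B(\pi)$ is their number and $\hat B_n(x)=\sum_{\pi\in\mathcal B_n}x^{\hat d_B(\pi)}$. Given $\sigma\in\mathfrak S_n$ extended by values $\sigma(0)$ and $\sigma(n+1)$ (according to a stated convention), an index $i\in[n]$ is a double ascent if $\sigma(i-1)<\sigma(i)<\sigma(i+1)$, a double descent if $\sigma(i-1)>\sigma(i)>\sigma(i+1)$, a valley if $\sigma(i-1)>\sigma(i)<\sigma(i+1)$, and a peak if $\sigma(i-1)<\sigma(i)>\sigma(i+1)$. $\mathrm{val}$ and $\mathrm{pk}$ denote the numbers of valleys and peaks, and $\mathrm{dda}$ the number of double ascents plus double descents. *)

(* Defs.v *)
From HB Require Import structures.
From mathcomp Require Import all_boot all_order all_algebra all_fingroup.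
Set Implicit Arguments. Unset Strict Implicit. Unset Printing Implicit Defensive.
Import Order.TTheory GRing.Theory Num.Theory.

(* A permutation s : 'S_n (of 'I_n = {0..n-1}) is read as the word
   sigma(1) ... sigma(n) on [n] = {1..n} via sigma(i) = s(i-1) + 1. *)
Definition pword (n : nat) (s : 'S_n) (i : nat) : nat :=
  match @insub nat (fun k => k < n) 'I_n (i.-1) with
  | Some j => (s j).+1
  | None => 0
  end.

Definition ext (n : nat) (a b : nat) (s : 'S_n) (i : nat) : nat :=
  if i == 0 then a else if i == n.+1 then b else pword s i.

Definition altdes (n : nat) (s : 'S_n) : nat :=
  count (fun i => (odd i && (pword s i.+1 < pword s i))
                  || (~~ odd i && (pword s i < pword s i.+1)))
        (iota 1 n.-1).

Definition A_hat (n : nat) : {poly int} := \sum_(s : 'S_n) 'X^(altdes s).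

(* Signed permutations of [n]: a pair (s, e) with s : 'S_n and a sign vector
   e; it represents pi with pi(i) = (-1)^(e (i-1)) * (s(i-1)+1) for i in [n],
   extended to pi(-i) = -pi(i).  This is a bijection with B_n. *)
Definition signed_perm (n : nat) := ('S_n * {ffun 'I_n -> bool})%type.

Definition sword (n : nat) (p : signed_perm n) (i : nat) : int :=
  match @insub nat (fun k => k < n) 'I_n (i.-1) with
  | Some j => if i == 0 then 0%R
              else ((-1) ^+ (p.2 j) * ((p.1 j).+1)%:Z)%R
  | None => 0%R
  end.

(* alternating descents of pi in B_n: i in {0} u [n-1] = {0..n-1}, pi(0)=0. *)
Definition altdesB (n : nat) (p : signed_perm n) : nat :=
  count (fun i => (~~ odd i && (sword p i < sword p i.+1)%R)
                  || (odd i && (sword p i.+1 < sword p i)%R))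
        (iota 0 n).

Definition B_hat (n : nat) : {poly int} := \sum_(p : signed_perm n) 'X^(altdesB p).

Definition dda (n a b : nat) (s : 'S_n) : nat :=
  count (fun i => ((ext a b s i.-1 < ext a b s i) && (ext a b s i < ext a b s i.+1))
               || ((ext a b s i < ext a b s i.-1) && (ext a b s i.+1 < ext a b s i)))
        (iota 1 n).

Definition valley (n a b : nat) (s : 'S_n) : nat :=
  count (fun i => (ext a b s i < ext a b s i.-1) && (ext a b s i < ext a b s i.+1))
        (iota 1 n).

Definition peak (n a b : nat) (s : 'S_n) : nat :=
  count (fun i => (ext a b s i.-1 < ext a b s i) && (ext a b s i.+1 < ext a b s i))
        (iota 1 n).

(* Main.v *)
Require Import Defs.
From mathcomp Require Import all_boot all_order all_algebra all_fingroup.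
From mathcomp Require Import zify ring.
Set Implicit Arguments. Unset Strict Implicit. Unset Printing Implicit Defensive.
Import Order.TTheory GRing.Theory Num.Theory.

Lemma sign_cond (o b1 b2 : bool) (x y : nat) : x != y ->
 ((~~ o && ((-1)^+o * ((-1)^+b1 * x%:Z) < (-1)^+(~~o) * ((-1)^+b2 * y%:Z))%R)
   || (o && ((-1)^+(~~o) * ((-1)^+b2 * y%:Z) < (-1)^+o * ((-1)^+b1 * x%:Z))%R))
 = (b1 && (y < x)) || (b2 && (x < y)).
Proof.
move=> Hxy.
case: o; case: b1; case: b2; rewrite /= ?expr0 ?expr1 ?mul1r ?mulN1r ?opprK;
  case: ltngtP Hxy => // H _; lia.
Qed.

Lemma count_sum (T : Type) (a : pred T) (s : seq T) : count a s = \sum_(x <- s) a x.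
Proof. by elim: s => [|x s IH]; rewrite ?big_nil ?big_cons //= IH. Qed.

Lemma tele (x y : nat -> nat) n : y 0 = 0 ->
  \sum_(0 <= i < n) (x i + y i.+1) + x n = \sum_(0 <= k < n.+1) (x k + y k).
Proof.
move=> y0; elim: n => [|n IH]; first by rewrite big_geq // big_nat1 y0; lia.
rewrite big_nat_recr // [RHS]big_nat_recr //= -IH; lia.
Qed.

Lemma sum_bool_sign (o : bool) (c : nat) :
  (\sum_(b : bool) 'X^((b (+) o) * c) = 1 + 'X^c :> {poly int})%R.
Proof. by rewrite big_bool; case: o; rewrite /= ?mul0n ?mul1n ?expr0 // addrC. Qed.

Lemma prod_counts (c : nat -> nat) (l : seq nat) : (forall k, c k <= 2) ->
 (\prod_(k <- l) (1 + 'X^(c k)) = (1+'X)^+count (fun k => c k == 1) l * 2^+count (fun k => c k == 0) l * (1 + 'X ^+ 2)^+ count (fun k => c k == 2) l :> {poly int})%R.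
Proof.
move=> Hc; elim: l => [|k l IH]; first by rewrite big_nil /= !expr0 !mulr1.
rewrite big_cons IH /= !exprD.
have := Hc k; case: (c k) => [|[|[|m]]] //= _; rewrite ?expr0 ?expr1; ring.
Qed.

Lemma charge_sum (a : nat -> nat) (E : nat -> bool) n :
  E 0 = false -> a n < a n.+1 -> (forall i, i < n -> a i != a i.+1) ->
  \sum_(0 <= i < n) ((E i && (a i.+1 < a i)) || (E i.+1 && (a i < a i.+1)) : nat)
  = \sum_(j < n) E j.+1 * ((a j < a j.+1) + (a j.+2 < a j.+1)).
Proof.
move=> E0 an dist.
pose x k := E k * (a k.+1 < a k); pose y k := E k * (a k.-1 < a k).
transitivity (\sum_(0 <= i < n) (x i + y i.+1)).
  apply: eq_big_nat => i /andP [_ Hi]; rewrite /x /y /=.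
  have := dist i Hi; case: ltngtP => // _ _; case: (E i); case: (E i.+1) => //.
have xn : x n = 0 by rewrite /x ltnNge ltnW // muln0.
transitivity (\sum_(0 <= i < n) (x i + y i.+1) + x n); first by rewrite xn addn0.
rewrite tele; last by rewrite /y ltnn muln0.
rewrite big_nat_recl // {1}/x {1}/y E0 /= add0n big_mkord.
by apply: eq_bigr => j _; rewrite /x /y /= mulnDr addnC.
Qed.

Lemma ordK n k (Hk : k < n) (j : 'I_n) : k = j -> Ordinal Hk = j.
Proof. by move=> e; apply: val_inj. Qed.

Lemma pwordE n (s : 'S_n) k (Hk : k < n) : pword s k.+1 = (s (Ordinal Hk)).+1.
Proof. by rewrite /pword /= (insubT (fun k => k < n) Hk). Qed.

Lemma extE n A B (s : 'S_n) k (Hk : k < n) : ext A B s k.+1 = (s (Ordinal Hk)).+1.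
Proof. by rewrite /ext /= eqSS (ltn_eqF Hk) pwordE. Qed.

Lemma ext0 n A B (s : 'S_n) : ext A B s 0 = A. Proof. by []. Qed.
Lemma extN n A B (s : 'S_n) : ext A B s n.+1 = B. Proof. by rewrite /ext /= eqxx. Qed.

Definition nfun n (h : 'I_n -> bool) (k : nat) : bool :=
  if k is k'.+1 then (if @insub nat (fun k => k < n) 'I_n k' is Some j then h j else false) else false.

Lemma nfunE n (h : 'I_n -> bool) k (Hk : k < n) : nfun h k.+1 = h (Ordinal Hk).
Proof. by rewrite /nfun /= (insubT (fun k => k < n) Hk). Qed.

Lemma ext_dist n A B (s : 'S_n) i : (A = 0 \/ n < A) -> i < n ->
  ext A B s i != ext A B s i.+1.
Proof.
move=> HA Hi; rewrite (extE _ _ _ Hi).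
case: i Hi => [|i] Hi.
  rewrite ext0; case: HA => [->|HA]; first by []. by rewrite neq_ltn (leq_ltn_trans _ HA) ?orbT // ltn_ord.
have Hi' : i < n by apply: ltnW.
rewrite (extE _ _ _ Hi') eqSS; apply/negP => /eqP H; have := perm_inj (val_inj H); move/(congr1 val) => /=; lia.
Qed.

Lemma ext_last n A B (s : 'S_n) : 0 < n -> n < B -> ext A B s n < ext A B s n.+1.
Proof.
case: n s => // n s _ HB; rewrite extN (extE _ _ _ (ltnSn n)).
by apply: leq_ltn_trans HB; apply: ltn_ord.
Qed.

Definition gA n (f : {ffun 'I_n -> bool}) (m : 'I_n) : int := (-1)^+(f m) * (m.+1)%:Z.

Lemma gA_inj n (f : {ffun 'I_n -> bool}) : injective (gA f).
Proof.
move=> a b; rewrite /gA; case: (f a); case: (f b);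
  rewrite ?expr0 ?expr1 ?mul1r ?mulN1r => H; apply: val_inj => /=; lia.
Qed.

Definition rk0 n (f : {ffun 'I_n -> bool}) (m : 'I_n) : nat :=
  #|[set k | (gA f k < gA f m)%R]|.

Lemma rk0_lt n (f : {ffun 'I_n -> bool}) m : rk0 f m < n.
Proof.
have n0 : 0 < n by apply: leq_ltn_trans (ltn_ord m).
rewrite /rk0 -[X in _ < X]prednK // ltnS.
have -> : n.-1 = #|predC1 m| by rewrite cardC1 card_ord.
apply: subset_leq_card; apply/subsetP => k; rewrite inE /= => H.
by apply/eqP => e; move: H; rewrite e ltxx.
Qed.

Lemma rk0_mono n (f : {ffun 'I_n -> bool}) a b :
  (gA f a < gA f b)%R -> rk0 f a < rk0 f b.
Proof.
move=> H; apply: proper_card; apply/properP; split.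
  by apply/subsetP => k; rewrite !inE => Hk; apply: lt_trans Hk H.
by exists a; rewrite !inE ?ltxx.
Qed.

Definition rkf n (f : {ffun 'I_n -> bool}) (m : 'I_n) : 'I_n := Ordinal (rk0_lt f m).

Lemma rk_lt n (f : {ffun 'I_n -> bool}) a b : (rkf f a < rkf f b) = (gA f a < gA f b)%R.
Proof.
apply/idP/idP; last exact: rk0_mono.
rewrite /= => H; case: (ltgtP (gA f a) (gA f b)) => // H2.
  by have := rk0_mono H2; rewrite ltnNge ltnW.
by move: H; rewrite (gA_inj H2) ltnn.
Qed.

Lemma rk_inj n (f : {ffun 'I_n -> bool}) : injective (rkf f).
Proof.
move=> a b e; apply: (gA_inj (f:=f)).
case: (ltgtP (gA f a) (gA f b)) => // H.
  by move: H; rewrite -rk_lt e ltnn.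
by move: H; rewrite -rk_lt e ltnn.
Qed.

Definition rkp n (f : {ffun 'I_n -> bool}) : 'S_n := perm (@rk_inj n f).

Definition cc (a : nat -> nat) (k : nat) : nat := (a k.-1 < a k) + (a k.+1 < a k).

Lemma sign_aux (o b : bool) (x : int) : ((-1)^+o * ((-1)^+(b (+) o) * x) = (-1)^+b * x)%R.
Proof. by case: o; case: b; rewrite /= ?expr0 ?expr1 ?mul1r ?mulN1r ?opprK. Qed.

Lemma sign_cond2 (W : nat -> int) (E : nat -> bool) (a : nat -> nat) i :
  W i = ((-1)^+(odd i) * ((-1)^+(E i) * (a i)%:Z))%R ->
  W i.+1 = ((-1)^+(odd i.+1) * ((-1)^+(E i.+1) * (a i.+1)%:Z))%R ->
  a i != a i.+1 ->
  ((~~ odd i && (W i < W i.+1)%R) || (odd i && (W i.+1 < W i)%R))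
  = (E i && (a i.+1 < a i)) || (E i.+1 && (a i < a i.+1)).
Proof. by move=> -> ->; exact: sign_cond. Qed.

Lemma idx0 n : iota 0 n = index_iota 0 n.
Proof. by rewrite /index_iota subn0. Qed.

Lemma altdesB_eq n (s : 'S_n) (e : {ffun 'I_n -> bool}) : 0 < n ->
  altdesB (s, e) = \sum_(j < n) (e j (+) odd j.+1) * cc (ext 0 n.+1 s) j.+1.
Proof.
move=> n0.
set a := ext 0 n.+1 s; pose h j := e j (+) odd j.+1; pose E := nfun h.
have swE : forall i, i <= n ->
    sword (s, e) i = ((-1)^+(odd i) * ((-1)^+(E i) * (a i)%:Z))%R.
  case=> [|k] Hk.
    by rewrite /sword /a ext0 mulr0; case: insub.
  rewrite /sword /= (insubT (fun k => k < n) Hk) /= /a (extE _ _ _ Hk).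
  by symmetry; apply: (sign_aux (odd k.+1)).
rewrite /altdesB count_sum idx0.
transitivity (\sum_(0 <= i < n)
   ((E i && (a i.+1 < a i)) || (E i.+1 && (a i < a i.+1)) : nat)).
  apply: eq_big_nat => i /andP [_ Hi]; congr (nat_of_bool _).
  apply: sign_cond2; [exact: swE (ltnW Hi) | exact: swE Hi | ].
  by apply: ext_dist => //; left.
rewrite charge_sum //; last by move=> i Hi; apply: ext_dist => //; left.
  by apply: eq_bigr => j _; rewrite /E (nfunE _ (ltn_ord j)) (ordK _ (erefl _)).
by apply: ext_last.
Qed.

Lemma altdesA_eq n (f : {ffun 'I_n -> bool}) (t : 'S_n) : 0 < n ->
  altdes (t * rkp f)%g = \sum_(j < n) (f (t j) (+) odd j.+1) * cc (ext n.+1 n.+1 t) j.+1.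
Proof.
move=> n0.
set a := ext n.+1 n.+1 t; pose h j := f (t j) (+) odd j.+1; pose E := nfun h.
pose W i := ((-1)^+(odd i) * ((-1)^+(E i) * (a i)%:Z))%R.
have WE : forall k (Hk : k < n), W k.+1 = gA f (t (Ordinal Hk)).
  move=> k Hk; rewrite /W /E (nfunE _ Hk) /a (extE _ _ _ Hk) /h /gA.
  exact: sign_aux.
have pwE : forall k k' (Hk : k < n) (Hk' : k' < n),
    (pword (t * rkp f)%g k.+1 < pword (t * rkp f)%g k'.+1) = (W k.+1 < W k'.+1)%R.
  move=> k k' Hk Hk'; rewrite (pwordE _ Hk) (pwordE _ Hk') !permM !permE ltnS.
  by rewrite (WE _ Hk) (WE _ Hk') rk_lt.
have Q0 : ((E 0 && (a 1 < a 0)) || (E 1 && (a 0 < a 1))) = false.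
  have Ht := ltn_ord (t (Ordinal n0)); rewrite /a ext0 (extE _ _ _ n0) /= ltnS ltnNge (ltnW Ht); by rewrite andbF.
have dist : forall i, i < n -> a i != a i.+1.
  by move=> i Hi; apply: ext_dist => //; right.
rewrite /altdes count_sum (_ : iota 1 n.-1 = index_iota 1 n); last first.
  by rewrite /index_iota subn1.
transitivity (\sum_(0 <= i < n)
   ((E i && (a i.+1 < a i)) || (E i.+1 && (a i < a i.+1)) : nat)); last first.
  rewrite charge_sum //; last by apply: ext_last.
  by apply: eq_bigr => j _; rewrite /E (nfunE _ (ltn_ord j)) (ordK _ (erefl _)).
have -> : \sum_(0 <= i < n)
   ((E i && (a i.+1 < a i)) || (E i.+1 && (a i < a i.+1)) : nat) =
   (((E 0 && (a 1 < a 0)) || (E 1 && (a 0 < a 1))) : nat) + \sum_(0 <= i < n.-1)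
   ((E i.+1 && (a i.+2 < a i.+1)) || (E i.+2 && (a i.+1 < a i.+2)) : nat).
  by rewrite -{1}(prednK n0) big_nat_recl.
rewrite Q0 add0n big_add1.
apply: eq_big_nat => i /andP [_ Hi].
have Hi2 : i.+1 < n by rewrite -(prednK n0).
have Hi1 : i < n by apply: ltnW.
rewrite (pwE i i.+1 Hi1 Hi2) (pwE i.+1 i Hi2 Hi1) orbC.
congr (nat_of_bool _); apply: sign_cond2 => //; exact: dist.
Qed.

Lemma XM n (F : 'I_n -> nat) : ('X^(\sum_j F j) = \prod_j 'X^(F j) :> {poly int})%R.
Proof. by apply: (big_morph _ (fun x y => exprD _ x y) (expr0 _)). Qed.

Lemma sum_ffun_prod n (c : 'I_n -> nat) :
  (\sum_(e : {ffun 'I_n -> bool}) 'X^(\sum_(j<n) (e j (+) odd j.+1) * c j)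
   = \prod_(j < n) (1 + 'X^(c j)) :> {poly int})%R.
Proof.
rewrite (eq_bigr (fun e : {ffun 'I_n -> bool} => (\prod_j 'X^((e j (+) odd j.+1) * c j))%R));
  last by move=> e _; rewrite XM.
transitivity ((\prod_(j < n) \sum_(b : bool) 'X^((b (+) odd j.+1) * c j) : {poly int}))%R;
  last by apply: eq_bigr => j _; apply: sum_bool_sign.
by rewrite bigA_distr_bigA.
Qed.

Lemma sum_ffun_prodA n (t : 'S_n) (c : 'I_n -> nat) :
  (\sum_(f : {ffun 'I_n -> bool}) 'X^(\sum_(j<n) (f (t j) (+) odd j.+1) * c j)
   = \prod_(j < n) (1 + 'X^(c j)) :> {poly int})%R.
Proof.
rewrite (eq_bigr (fun f : {ffun 'I_n -> bool} =>
   (\prod_m 'X^((f m (+) odd ((t^-1)%g m).+1) * c ((t^-1)%g m)))%R)); last first.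
  move=> f _; rewrite XM (reindex_inj (@perm_inj _ (t^-1)%g)) /=.
  by apply: eq_bigr => m _; rewrite permKV.
transitivity ((\prod_(m < n) \sum_(b : bool) 'X^((b (+) odd ((t^-1)%g m).+1) * c ((t^-1)%g m)) : {poly int}))%R;
  last first.
  rewrite (eq_bigr (fun m => 1 + 'X^(c ((t^-1)%g m)))%R); last by move=> m _; apply: sum_bool_sign.
  rewrite [RHS](reindex_inj (@perm_inj _ (t^-1)%g)) /=.
  by [].
by rewrite bigA_distr_bigA.
Qed.

Lemma stat_cases (x y z : nat) : x != y -> y != z ->
 [/\ (((x < y) && (y < z)) || ((y < x) && (z < y))) = ((x < y) + (z < y) == 1),
     ((y < x) && (y < z)) = ((x < y) + (z < y) == 0) &
     ((x < y) && (z < y)) = ((x < y) + (z < y) == 2)].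
Proof. by case: (ltngtP x y) => //; case: (ltngtP y z). Qed.

Lemma prod_stats n A (s : 'S_n) : (A = 0 \/ n < A) -> 0 < n ->
 (\prod_(j < n) (1 + 'X^(cc (ext A n.+1 s) j.+1))
  = (1 + 'X) ^+ dda A n.+1 s * 2 ^+ valley A n.+1 s * (1 + 'X ^+ 2) ^+ peak A n.+1 s
   :> {poly int})%R.
Proof.
move=> HA n0.
set a := ext A n.+1 s.
rewrite -(big_mkord xpredT (fun j => 1 + 'X^(cc a j.+1))%R).
rewrite (_ : (\prod_(0 <= j < n) _ = \prod_(1 <= k < n.+1) (1 + 'X^(cc a k) : {poly int}))%R);
  last by rewrite big_add1.
rewrite /index_iota subSS subn0.
rewrite prod_counts; last by move=> k; rewrite /cc; case: (_ < _); case: (_ < _).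
have H : forall k, k \in iota 1 n -> a k.-1 != a k /\ a k != a k.+1.
  move=> k; rewrite mem_iota => /andP [k1 k2].
  have kn : k <= n by rewrite -ltnS -(add1n n).
  split.
    have := @ext_dist n A n.+1 s k.-1 HA; rewrite prednK //; apply.
    lia.
  case: (ltngtP k n) kn => // [kn|->] _; first by apply: ext_dist.
  by rewrite neq_ltn ext_last.
rewrite /dda /valley /peak.
congr (_ ^+ _ * _ ^+ _ * _ ^+ _)%R; apply: eq_in_count => k /H [d1 d2];
  by have [h1 h2 h3] := stat_cases d1 d2; rewrite /cc /= ?h1 ?h2 ?h3.
Qed.

Local Open Scope ring_scope.

Theorem theorem1p1 (n : nat) (hn : (1 <= n)%N) :
  (2 ^+ n * A_hat n =
     \sum_(s : 'S_n) (1 + 'X) ^+ dda n.+1 n.+1 s * 2 ^+ valley n.+1 n.+1 s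
                      * (1 + 'X ^+ 2) ^+ peak n.+1 n.+1 s)
  /\
  (B_hat n =
     \sum_(s : 'S_n) (1 + 'X) ^+ dda 0 n.+1 s * 2 ^+ valley 0 n.+1 s
                      * (1 + 'X ^+ 2) ^+ peak 0 n.+1 s).
Proof.
split.
  rewrite /A_hat.
  transitivity (\sum_(f : {ffun 'I_n -> bool}) \sum_(s : 'S_n) ('X^(altdes s) : {poly int})).
    by rewrite sumr_const card_ffun card_bool card_ord -[RHS]mulr_natl natrX.
  transitivity (\sum_(f : {ffun 'I_n -> bool}) \sum_(t : 'S_n)
     ('X^(\sum_(j < n) (f (t j) (+) odd j.+1) * cc (ext n.+1 n.+1 t) j.+1) : {poly int})).
    apply: eq_bigr => f _; rewrite (reindex_inj (mulIg (rkp f))) /=.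
    by apply: eq_bigr => t _; rewrite altdesA_eq.
  rewrite exchange_big /=; apply: eq_bigr => t _.
  rewrite (sum_ffun_prodA t (fun j => cc (ext n.+1 n.+1 t) j.+1)).
  by apply: prod_stats => //; right.
rewrite /B_hat.
transitivity (\sum_(s : 'S_n) \sum_(e : {ffun 'I_n -> bool}) ('X^(altdesB (s, e)) : {poly int})).
  by rewrite pair_bigA; apply: eq_bigr => -[s e].
apply: eq_bigr => s _.
transitivity (\sum_(e : {ffun 'I_n -> bool})
  ('X^(\sum_(j < n) (e j (+) odd j.+1) * cc (ext 0 n.+1 s) j.+1) : {poly int})).
  by apply: eq_bigr => e _; rewrite altdesB_eq.
rewrite (sum_ffun_prod (fun j => cc (ext 0 n.+1 s) j.+1)).
by apply: prod_stats => //; left.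
Qed.
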